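(* Let $n\ge 2$, $K\ge 1$ and $\lambda_-<\lambda_+$ in $(-1,1)$. The set $\mathcal{G}_{\lambda_-,\lambda_+}$ is non-convex.
   Context: $\mathcal{W}_{\lambda_-,\lambda_+}$ denotes the set of symmetric matrices $W\in\mathbb{R}^{n\times n}$ with $\lambda_1(W)=1$ with eigenvector $\mathbf{1}/\sqrt{n}$ and $\lambda_-\le\lambda_n(W)\le\dots\le\lambda_2(W)\le\lambda_+$. $\mathcal{G}_{\lambda_-,\lambda_+}$ is the set of all symmetric positive semidefinite matrices of the form $G_c=\begin{bmatrix}P_x^TP_x & P_x^TP_y\\ P_y^TP_x & P_y^TP_y\end{bmatrix}$, where for some dimension $d\ge1$, $P_x=[x_1^1\dots x_n^1\dots x_1^K\dots x_n^K]\in\mathbb{R}^{d\times nK}$ and $P_y=[y_1^1\dots y_n^1\dots y_1^K\dots y_n^K]\in\mathbb{R}^{d\times nK}$, such that there exists $W\in\mathcal{W}_{\lambda_-,\lambda_+}$ with $\mathbf{y}^k=(W\otimes I_d)\mathbf{x}^k$ for all $k=1,\dots,K$, where $\mathbf{x}^k=(x_1^k,\dots,x_n^k)\in\mathbb{R}^{nd}$ and similarly for $\mathbf{y}^k$. *)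

(* Defs.v *)
From HB Require Import structures.
From mathcomp Require Import all_boot all_order all_algebra.
From mathcomp Require Import reals.
Set Implicit Arguments. Unset Strict Implicit. Unset Printing Implicit Defensive.
Import Order.TTheory GRing.Theory Num.Theory.
Local Open Scope ring_scope.

(* W_{lm,lp}: symmetric n x n real matrices W with W 1 = 1 (eigenvalue
   lambda_1(W) = 1 with eigenvector 1/sqrt n) and whose remaining eigenvalues
   lambda_2 >= ... >= lambda_n (listed with multiplicity, i.e. as the remaining
   roots of the characteristic polynomial) all lie in [lm, lp]. *)
Definition inW (R : realType) (n : nat) (lm lp : R) (W : 'M[R]_n) : Prop :=
  W^T = W /\
  W *m const_mx 1 = (const_mx 1 : 'cV[R]_n) /\
  exists mu : 'I_n.-1 -> R,
    char_poly W = ('X - 1%:P) * \prod_(i < n.-1) ('X - (mu i)%:P) /\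
    (forall i, lm <= mu i <= lp).

(* G_{lm,lp}: Gram matrices [Px Py]^T [Px Py] where the columns of Px are
   x_1^1..x_n^1 .. x_1^K..x_n^K (column of x_i^k has index k*n+i, i.e.
   mxvec_index k i), and y^k = (W (x) I_d) x^k, i.e.
   y_i^k = sum_j W_ij x_j^k, for some W in W_{lm,lp} and some d >= 1. *)
Definition Gset (R : realType) (n K : nat) (lm lp : R)
    (G : 'M[R]_(K * n + K * n)) : Prop :=
  exists d : nat, (0 < d)%N /\
  exists (Px Py : 'M[R]_(d, K * n)) (W : 'M[R]_n),
    inW lm lp W /\
    (forall (k : 'I_K) (i : 'I_n),
        col (mxvec_index k i) Py =
        \sum_(j < n) W i j *: col (mxvec_index k j) Px) /\
    G = block_mx (Px^T *m Px) (Px^T *m Py) (Py^T *m Px) (Py^T *m Py).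

Definition convex_mxset (R : realType) (m : nat) (S : 'M[R]_m -> Prop) : Prop :=
  forall (A B : 'M[R]_m) (t : R), S A -> S B -> 0 <= t <= 1 ->
    S (t *: A + (1 - t) *: B).

(* Main.v *)
Require Import Defs.
From HB Require Import structures.
From mathcomp Require Import all_boot all_order all_algebra.
From mathcomp Require Import reals.
From mathcomp Require Import ring lra.
Set Implicit Arguments. Unset Strict Implicit. Unset Printing Implicit Defensive.
Import Order.TTheory GRing.Theory Num.Theory.
Local Open Scope ring_scope.

Section W.
Variable R : realType.

Lemma mul_const_mx m p q (a b : R) :
  (const_mx a : 'M[R]_(m, p)) *m (const_mx b : 'M[R]_(p, q)) = const_mx ((a * b) *+ p).
Proof.
apply/matrixP => i j; rewrite !mxE.
under eq_bigr do rewrite !mxE.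
by rewrite sumr_const card_ord.
Qed.

Lemma scalB m (x y : {poly R}) : x%:M - y%:M = (x - y)%:M :> 'M_m.
Proof. by apply/matrixP=> i j; rewrite !mxE; case: (i == j); rewrite ?mulr1n ?mulr0n ?subr0. Qed.

Variable n' : nat.
Variable a : R.
Let c := (1 - a) / (n'.+1)%:R.

Lemma ac : a + c *+ n'.+1 = 1.
Proof. rewrite /c -mulr_natr; field. apply/negP => /eqP h; have := ler0n R n'; lra. Qed.

Definition Wm : 'M[R]_(1 + n') :=
  block_mx ((a + c)%:M) (const_mx c) (const_mx c) (a%:M + const_mx c).
Definition Tm : 'M[R]_(1 + n') :=
  block_mx 1%:M 0 (const_mx c) (a%:M).
Definition Sm : 'M[R]_(1 + n') :=
  block_mx 1%:M (const_mx 1) 0 1%:M.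

Lemma TS_SW : Tm *m Sm = Sm *m Wm.
Proof.
rewrite /Tm /Sm /Wm !mulmx_block !mul_const_mx !mul1mx !mul0mx !mulmx1 !mulmx0.
rewrite ?mulmxDr ?mulmxDl ?mul_scalar_mx ?mul_mx_scalar ?mul_const_mx.
have h := ac.
congr block_mx; apply/matrixP => i j; rewrite !mxE ?ord1 /=; lra.
Qed.

Lemma Wm_sym : Wm^T = Wm.
Proof.
rewrite /Wm tr_block_mx !trmx_const !linearD /= !tr_scalar_mx !trmx_const //.
Qed.

Lemma Wm_one : Wm *m const_mx 1 = (const_mx 1 : 'cV[R]_(1 + n')).
Proof.
rewrite -[const_mx 1 in LHS]col_mx_const /Wm mul_block_col.
rewrite !mulmxDl !mul_scalar_mx !mul_const_mx -col_mx_const.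
have h := ac.
congr col_mx; apply/matrixP => i j; rewrite !mxE ?ord1 /=; lra.
Qed.

Lemma Wm_char : char_poly Wm = ('X - 1%:P) * \prod_(i < n') ('X - a%:P).
Proof.
have e : char_poly Tm = ('X - 1%:P) * \prod_(i < n') ('X - a%:P).
  rewrite /char_poly /char_poly_mx /Tm map_block_mx /= map_const_mx !map_scalar_mx /=.
  rewrite [X in X - _](scalar_mx_block 1 n') opp_block_mx add_block_mx.
  rewrite map_mx0 subr0 det_lblock !scalB !det_scalar prodr_const card_ord.
  by rewrite expr1.
rewrite -e.
have hS : \det (map_mx (@polyC R) Sm) = 1.
  by rewrite /Sm map_block_mx map_mx0 det_ublock !map_scalar_mx !det_scalar1 ?mulr1 ?det_scalar ?expr1n ?mulr1.
have := congr1 (map_mx (@polyC R)) TS_SW.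
rewrite !map_mxM => H.
have H2 : char_poly_mx Tm *m map_mx polyC Sm = map_mx polyC Sm *m char_poly_mx Wm.
  by rewrite /char_poly_mx mulmxBl mulmxBr H mul_scalar_mx mul_mx_scalar.
have := congr1 determinant H2; rewrite !detM hS mulr1 mul1r.
by [].
Qed.

End W.

Lemma gram_key (R : realType) (n K d : nat) (Px Py : 'M[R]_(d, K * n)) (W : 'M[R]_n) :
  (forall (k : 'I_K) (i : 'I_n),
        col (mxvec_index k i) Py =
        \sum_(j < n) W i j *: col (mxvec_index k j) Px) ->
  Px^T *m Px = 1%:M ->
  Py^T *m Py = (Px^T *m Py)^T *m (Px^T *m Py).
Proof.
move=> hc h1.
have key : Px *m Px^T *m Py = Py.
  suff hcol : forall c, col c (Px *m Px^T *m Py) = col c Py.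
    apply/matrixP => r c; have := congr1 (fun M : 'M[R]_(d, 1) => M r 0) (hcol c).
    by rewrite !mxE.
  move=> c; case/mxvec_indexP: c => k i.
  rewrite colE -mulmxA -colE hc mulmx_sumr; apply: eq_bigr => j _.
  by rewrite -scalemxAr colE !mulmxA -(mulmxA Px) h1 mulmx1 -colE.
rewrite trmx_mul trmxK !mulmxA. by rewrite -{2}key !mulmxA.
Qed.

Section Main.
Variables (R : realType) (n' K : nat).

Definition Nm (a : R) : 'M[R]_(K * n'.+1) :=
  \matrix_(r, c) (mxvec (\matrix_(k < K, i < n'.+1)
       \sum_(j < n'.+1) Wm (R:=R) n' a i j * (r == mxvec_index k j)%:R)) 0 c.

Lemma Nm_col a (k : 'I_K) (i : 'I_n'.+1) :
  col (mxvec_index k i) (Nm a) =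
  \sum_(j < n'.+1) Wm (R:=R) n' a i j *: col (mxvec_index k j) (1%:M : 'M[R]_(K * n'.+1)).
Proof.
apply/matrixP => r z; rewrite !mxE mxvecE mxE summxE; apply: eq_bigr => j _.
by rewrite !mxE.
Qed.

Lemma mxvec_index_inj (k : 'I_K) (i j : 'I_n'.+1) :
  mxvec_index k i = mxvec_index k j -> i = j.
Proof. by move/cast_ord_inj/enum_rank_inj => [->]. Qed.

Lemma Nm_diag a (k : 'I_K) (i : 'I_n'.+1) :
  Nm a (mxvec_index k i) (mxvec_index k i) = Wm (R:=R) n' a i i.
Proof.
rewrite mxE mxvecE mxE (bigD1 i) //= eqxx mulr1 big1 ?addr0 // => j hj.
case: eqP => [/mxvec_index_inj e|]; last by rewrite mulr0.
by move: hj; rewrite e eqxx.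
Qed.

Lemma Wm00 a : Wm (R:=R) n' a ord0 ord0 = a + (1 - a) / (n'.+1)%:R.
Proof.
have -> : (ord0 : 'I_(1 + n')) = lshift n' (ord0 : 'I_1) by apply/val_inj.
by rewrite /Wm block_mxEul mxE.
Qed.

End Main.

Lemma inW_Wm (R : realType) n' (lm lp a : R) : lm <= a <= lp ->
  inW lm lp (Wm (R:=R) n' a).
Proof.
move=> ha; split; first exact: Wm_sym.
split; first exact: Wm_one.
by exists (fun _ => a); split; [exact: Wm_char | by []].
Qed.

Unset Implicit Arguments.

Theorem lemma1 (R : realType) (n K : nat) (lm lp : R) :
  (2 <= n)%N -> (1 <= K)%N -> -1 < lm -> lm < lp -> lp < 1 ->
  ~ convex_mxset (@Gset R n K lm lp).
Proof.
move=> hn hK hlm hlmp hlp conv.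
move: conv; case: n hn => [//|n'] hn conv.
pose G (a : R) : 'M[R]_(K * n'.+1 + K * n'.+1) :=
  block_mx ((1%:M)^T *m 1%:M) ((1%:M)^T *m Nm n' K a)
           ((Nm n' K a)^T *m 1%:M) ((Nm n' K a)^T *m Nm n' K a).
have GS : forall a, lm <= a <= lp -> Gset lm lp (G a).
  move=> a ha; exists (K * n'.+1)%N; split; first by rewrite muln_gt0 hK.
  exists 1%:M, (Nm n' K a), (Wm (R:=R) n' a); split; first exact: inW_Wm.
  by split; [exact: Nm_col|].
have := conv (G lm) (G lp) (1/2) (GS lm _) (GS lp _).
case; rewrite ?lexx ?(ltW hlmp) /=; try lra.
move=> d [_ [Px [Py [W [_ [hc eG]]]]]].
rewrite /G !scale_block_mx add_block_mx in eG; case/eq_block_mx: eG => eA eB _ eD.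
rewrite trmx1 !mul1mx -scalerDl addrC subrK scale1r in eA.
rewrite trmx1 !mul1mx in eB.
have hg := gram_key hc (esym eA).
rewrite -eB -eD in hg.
pose c := mxvec_index (Ordinal hK) (ord0 : 'I_n'.+1).
have := congr1 (fun M : 'M[R]_(K * n'.+1) => M c c) hg.
rewrite !mxE /=.
clear G GS eD eB hc eA conv.
set N1 := Nm n' K lm; set N2 := Nm n' K lp.
have eN1 : N1 c c = Nm n' K lm c c by [].
have eN2 : N2 c c = Nm n' K lp c c by [].
clearbody N1 N2.
set h := (1 / 2 : R).
have s1 : forall N : 'M[R]_(K * n'.+1), \sum_j N^T c j * N j c = \sum_j N j c * N j c.
  by move=> N; apply: eq_bigr => j _; rewrite mxE.
have s3 : \sum_j (h *: N1 + (1 - h) *: N2)^T c j * (h *: N1 + (1 - h) *: N2) j c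
   = \sum_j (h * N1 j c + (1 - h) * N2 j c) * (h * N1 j c + (1 - h) * N2 j c).
  by apply: eq_bigr => j _; rewrite !mxE.
under eq_bigr do rewrite !mxE.
under [X in _ + _ * X]eq_bigr do rewrite !mxE.
under [X in _ = X]eq_bigr do rewrite !mxE.
move=> E.
have E2 : \sum_j (N1 j c - N2 j c) ^+ 2 = 0.
  have -> : \sum_j (N1 j c - N2 j c) ^+ 2 = 4 * (h * \sum_j N1 j c * N1 j c +
     (1 - h) * \sum_j N2 j c * N2 j c -
     \sum_j (h * N1 j c + (1 - h) * N2 j c) * (h * N1 j c + (1 - h) * N2 j c)).
    rewrite !mulr_sumr -big_split -sumrB mulr_sumr; apply: eq_bigr => j _ /=.
    by rewrite /h; field.
  lra.
have E3 : (N1 c c - N2 c c) ^+ 2 = 0 := psumr_eq0P (fun j _ => sqr_ge0 (N1 j c - N2 j c)) E2 isT.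
have E4 : N1 c c = N2 c c.
  by apply/eqP; rewrite -subr_eq0 -sqrf_eq0 E3.
move: E4; rewrite eN1 eN2 /c !Nm_diag !Wm00 => E5.
have hq : 2 <= (n'.+1)%:R :> R by rewrite ler_nat.
set q := (n'.+1)%:R : R in E5 hq.
have hu : q^-1 * q = 1 by rewrite mulVf // gt_eqF // (lt_le_trans _ hq).
move: E5; rewrite /q; set u := q^-1 in hu *.
nra.
Qed.
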